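(* Let $\mathcal{A}$ be a deterministic, singly-initiated, event-driven distributed protocol that correctly identifies the bridges of every connected graph. Then for every connected graph $G=(V,E)$, the execution of $\mathcal{A}$ on $G$ sends at least $|E|$ messages and takes at least $\mathrm{Diam}(G)/2$ time.
   Context: Network model: a connected undirected graph $G=(V,E)$ whose nodes are processors and whose edges are two-way communication links; each node initially knows only its own identity and its incident links (not the rest of the graph). Singly-initiated means exactly one node begins computing spontaneously; event-driven means every other node performs no action (in particular sends no message) before it has received a message. An edge is a bridge if its deletion disconnects $G$. ''Correctly identifies the bridges'' means that at termination every edge has been correctly classified as a bridge or non-bridge. $\mathrm{Diam}(G)$ is the maximum distance between two vertices of $G$; time is measured in synchronous rounds. *)

(* Defs.v *)
(* A synchronous message-passing model (KT0: each node knows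
   its identity and its incident links, as port numbers 0..deg-1). *)
From mathcomp Require Import all_boot.
Set Implicit Arguments. Unset Strict Implicit. Unset Printing Implicit Defensive.

Section Graphs.
Variable V : finType.
Implicit Types (adj : rel V).

Definition connected_graph adj := forall x y : V, connect adj x y.

Definition del_edge adj (u v : V) : rel V :=
  fun x y => adj x y && ~~ (((x == u) && (y == v)) || ((x == v) && (y == u))).

Definition is_bridge adj (u v : V) : bool :=
  adj u v && ~~ [forall x, forall y, connect (del_edge adj u v) x y].

(* the edge set E as a set of 2-element vertex sets; |E| = nedges *)
Definition edge_set adj : {set {set V}} :=
  [set E : {set V} | [exists x, exists y, adj x y && (E == [set x; y])]].
Definition nedges adj : nat := #|edge_set adj|.

Definition walk_of_length adj (x y : V) (n : nat) : bool :=
  [exists p : n.-tuple V, path adj x p && (last x p == y)].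

Definition is_dist adj (x y : V) (d : nat) : Prop :=
  walk_of_length adj x y d /\ forall n, n < d -> ~~ walk_of_length adj x y n.

Definition is_diam adj (D : nat) : Prop :=
  (exists x y, is_dist adj x y D) /\
  forall x y d, is_dist adj x y d -> d <= D.
End Graphs.

(* A network: graph, node identities, local port numbering (nbr v lists the
   neighbours of v; port i of v is the link to nth v (nbr v) i), and the
   unique initiator. *)
Record network (V : finType) := Network {
  adj : rel V;
  ident : V -> nat;
  nbr : V -> seq V;
  initiator : V
}.

Definition valid_network (V : finType) (N : network V) : Prop :=
  symmetric (adj N) /\ irreflexive (adj N) /\ connected_graph (adj N) /\
  injective (ident N) /\
  (forall v, uniq (nbr N v) /\ forall w, (w \in nbr N v) = adj N v w).

(* A deterministic protocol: a node's local state is initialised from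
   (is-initiator flag, own identity, own degree); in every round a node that
   is awake and not halted maps (state, messages received on each port) to
   (new state, message to send on each port).  Halted states are final;
   poutput s i says whether the link at port i is classified as a bridge. *)
Record protocol := Protocol {
  pstate : Type;
  pmsg : Type;
  pinit : bool -> nat -> nat -> pstate;
  pstep : pstate -> (nat -> option pmsg) -> pstate * (nat -> option pmsg);
  phalted : pstate -> bool;
  poutput : pstate -> nat -> bool
}.

Section Exec.
Variables (A : protocol) (V : finType) (N : network V).

Definition deg (v : V) : nat := size (nbr N v).

Definition msgs := V -> nat -> option (pmsg A).

Definition inbox (sent : msgs) (v : V) : nat -> option (pmsg A) :=
  fun i => if i < deg v then
             let w := nth v (nbr N v) i in sent w (index v (nbr N w))
           else None.

Definition restrict (v : V) (m : nat -> option (pmsg A)) : nat -> option (pmsg A) :=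
  fun i => if i < deg v then m i else None.

(* One synchronous round at node v.  [None] = asleep (has not yet acted).
   Event-driven: an asleep node does nothing until it receives a message;
   it then wakes up (non-initiator initial state) and processes it. *)
Definition node_round (v : V) (prev : option (pstate A))
    (inb : nat -> option (pmsg A)) : option (pstate A) * (nat -> option (pmsg A)) :=
  match prev with
  | Some s =>
      if phalted s then (Some s, fun _ => None)
      else let sm := pstep s inb in (Some sm.1, restrict v sm.2)
  | None =>
      if has (fun i => isSome (inb i)) (iota 0 (deg v)) then
        let sm := pstep (pinit A false (ident N v) (deg v)) inb in
        (Some sm.1, restrict v sm.2)
      else (None, fun _ => None)
  end.

(* singly initiated: only the initiator is awake before round 0 *)
Definition prev0 (v : V) : option (pstate A) :=
  if v == initiator N then Some (pinit A true (ident N v) (deg v)) else None.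

(* exec r = (states after round r, messages sent during round r) *)
Fixpoint exec (r : nat) : (V -> option (pstate A)) * msgs :=
  match r with
  | 0 => (fun v => (node_round v (prev0 v) (fun _ => None)).1,
          fun v => (node_round v (prev0 v) (fun _ => None)).2)
  | r'.+1 => let c := exec r' in
          (fun v => (node_round v (c.1 v) (inbox c.2 v)).1,
           fun v => (node_round v (c.1 v) (inbox c.2 v)).2)
  end.

(* number of messages sent during rounds 0..T *)
Definition msg_count (T : nat) : nat :=
  \sum_(r < T.+1) \sum_(v : V)
     count (fun i => isSome ((exec r).2 v i)) (iota 0 (deg v)).

Definition terminated (T : nat) : Prop :=
  forall v, exists s, (exec T).1 v = Some s /\ phalted s.

Definition outputs_correct (T : nat) : Prop :=
  forall v s, (exec T).1 v = Some s ->
    forall i, i < deg v -> poutput s i = is_bridge (adj N) v (nth v (nbr N v) i).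
End Exec.

(* A correctly identifies the bridges of every connected graph (for every
   identity assignment, port numbering and choice of initiator). *)
Definition identifies_bridges (A : protocol) : Prop :=
  forall (V : finType) (N : network V), valid_network N ->
    exists T, terminated A N T /\ outputs_correct A N T.

(* Main.v *)
Require Import Defs.
From mathcomp Require Import all_boot.
From Stdlib Require Import FunctionalExtensionality.
Set Implicit Arguments. Unset Strict Implicit. Unset Printing Implicit Defensive.

Section Basic.
Variables (A : protocol) (V : finType) (N : network V).

Lemma exec_S r :
  exec A N r.+1 = (fun v => (node_round N v ((exec A N r).1 v) (inbox N (exec A N r).2 v)).1,
                   fun v => (node_round N v ((exec A N r).1 v) (inbox N (exec A N r).2 v)).2).
Proof. by []. Qed.

Lemma exec_S1 r v :
  (exec A N r.+1).1 v = (node_round N v ((exec A N r).1 v) (inbox N (exec A N r).2 v)).1.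
Proof. by []. Qed.
Lemma exec_S2 r v :
  (exec A N r.+1).2 v = (node_round N v ((exec A N r).1 v) (inbox N (exec A N r).2 v)).2.
Proof. by []. Qed.
Lemma exec_01 v : (exec A N 0).1 v = (node_round N v (prev0 A N v) (fun _ => None)).1.
Proof. by []. Qed.
Lemma exec_02 v : (exec A N 0).2 v = (node_round N v (prev0 A N v) (fun _ => None)).2.
Proof. by []. Qed.

Lemma node_round_none v (p : option (pstate A)) inb i :
  (node_round N v p inb).1 = None -> (node_round N v p inb).2 i = None.
Proof.
rewrite /node_round; case: p => [s|].
  by case: (phalted s).
by case: has.
Qed.

Lemma exec_msg_awake r v i : (exec A N r).2 v i <> None -> (exec A N r).1 v <> None.
Proof.
move=> H H2; apply: H; case: r H2 => [|r] H2.
  by rewrite exec_02; apply: node_round_none; rewrite -exec_01.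
by rewrite exec_S2; apply: node_round_none; rewrite -exec_S1.
Qed.

Lemma halted_after T : terminated A N T -> forall k,
  (forall v, (exec A N (T + k)).1 v = (exec A N T).1 v) /\
  (forall v i, 0 < k -> (exec A N (T + k)).2 v i = None).
Proof.
move=> Ht; elim=> [|k [IH1 IH2]]; first by rewrite addn0.
have E v : (exec A N (T + k).+1).1 v = (exec A N T).1 v /\
           (forall i, (exec A N (T + k).+1).2 v i = None).
  have [s [Hs Hh]] := Ht v.
  rewrite exec_S1 exec_S2 IH1 Hs /node_round Hh; by [].
by rewrite addnS; split=> [v|v i _]; case: (E v).
Qed.

Lemma inbox_some r x i : isSome (inbox N (exec A N r).2 x i) ->
  i < deg N x /\ (exec A N r).2 (nth x (nbr N x) i) (index x (nbr N (nth x (nbr N x) i))) <> None.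
Proof.
rewrite /inbox; case: ifP => // Hi H; split=> //.
by move: H; case: ((exec A N r).2 _ _).
Qed.

End Basic.

Section Wake.
Variables (A : protocol) (V : finType) (N : network V).
Hypothesis HN : valid_network N.

Lemma adj_nbr x i : i < deg N x -> adj N x (nth x (nbr N x) i).
Proof.
move=> Hi; case: HN => _ [_ [_ [_ Hn]]]; case: (Hn x) => _ <-.
exact: mem_nth.
Qed.

Lemma wake r x : (exec A N r).1 x <> None ->
  (exists p, size p <= r /\ path (adj N) x p /\ last x p = initiator N) /\
  (exists q, size q <= r /\ path (adj N) (initiator N) q /\ last (initiator N) q = x).
Proof.
have Hsym : symmetric (adj N) by case: HN.
elim: r x => [|r IH] x.
  rewrite exec_01 /prev0; case: eqP => [->|_].
    by split; exists [::].
  by rewrite /node_round; case: hasP => [[i _ //]|_ /= H]; case: H.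
case E: ((exec A N r).1 x) => [s|].
  move=> _; have [[p [Hp1 Hp2]] [q [Hq1 Hq2]]] := IH x (ltac:(by rewrite E)).
  by split; [exists p | exists q]; split=> //; apply: leqW.
rewrite exec_S1 E /node_round; case: hasP => [[i Hi Hs] _|]; last by move=> _ /=.
have [Hi' Hm] := inbox_some Hs.
set w := nth x (nbr N x) i in Hm.
have Hxw : adj N x w := adj_nbr Hi'.
have [[p [Hp1 [Hp2 Hp3]]] [q [Hq1 [Hq2 Hq3]]]] := IH w (exec_msg_awake Hm).
split.
  exists (w :: p); split; first by [].
  by rewrite /= Hxw Hp2.
exists (rcons q x); rewrite size_rcons rcons_path last_rcons Hq2 Hq3 Hsym Hxw.
by [].
Qed.

Lemma walkP x y p : path (adj N) x p -> last x p = y -> walk_of_length (adj N) x y (size p).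
Proof.
move=> H1 H2; apply/existsP; exists (in_tuple p); by rewrite H1 H2 eqxx.
Qed.

Lemma diam_bound T : terminated A N T -> forall D, is_diam (adj N) D -> D <= 2 * T.
Proof.
move=> Ht D [[x [y [Hw Hn]]] _].
have Aw z : (exec A N T).1 z <> None by have [s [-> _]] := Ht z.
have [[p [Hp1 [Hp2 Hp3]]] _] := wake (Aw x).
have [_ [q [Hq1 [Hq2 Hq3]]]] := wake (Aw y).
have Hc : walk_of_length (adj N) x y (size (p ++ q)).
  apply: walkP; first by rewrite cat_path Hp2 Hp3 Hq2.
  by rewrite last_cat Hp3 Hq3.
rewrite leqNgt; apply/negP => HD.
have Hlt : size (p ++ q) < D.
  rewrite size_cat; apply: leq_ltn_trans HD; rewrite mul2n -addnn; exact: leq_add.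
by move: (Hn _ Hlt); rewrite Hc.
Qed.
End Wake.

Definition cr (V : eqType) (u v x w : V) : bool :=
  ((x == u) && (w == v)) || ((x == v) && (w == u)).

Lemma crC (V : eqType) (u v x w : V) : cr u v x w = cr u v w x.
Proof. by rewrite /cr orbC [(w == u) && _]andbC [(w == v) && _]andbC. Qed.

Section Bridge.
Variables (A : protocol) (V : finType) (N : network V).
Hypothesis HN : valid_network N.
Variables (u v : V) (T : nat).
Hypothesis Ht : terminated A N T.
Hypothesis Hno : forall r, r <= T ->
  (exec A N r).2 u (index v (nbr N u)) = None /\ (exec A N r).2 v (index u (nbr N v)) = None.

Lemma no_msg_cr r x w : r <= T -> cr u v x w -> (exec A N r).2 w (index x (nbr N w)) = None.
Proof.
move=> Hr; case: (Hno Hr) => H1 H2.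
by case/orP=> /andP [/eqP -> /eqP ->].
Qed.

Lemma del_edgeE (x y : V) : del_edge (adj N) u v x y = adj N x y && ~~ cr u v x y.
Proof. by []. Qed.

Lemma bridge_false : is_bridge (adj N) u v -> False.
Proof.
case/andP=> _ Hnc.
have Hsym : symmetric (adj N) by case: HN.
set d := del_edge (adj N) u v.
have dsym : symmetric d.
  by move=> x y; rewrite /d !del_edgeE Hsym crC.
have [z Hz] : exists z, ~~ connect d (initiator N) z.
  move/forallPn: Hnc => [x /forallPn [y Hxy]].
  case Hx: (connect d (initiator N) x); last by exists x; rewrite Hx.
  exists y; apply: contra Hxy => Hy.
  by apply: connect_trans Hy; rewrite (sym_connect_sym dsym).
have Inv : forall r, r <= T -> forall x, ~~ connect d (initiator N) x ->
   (exec A N r).1 x = None /\ forall i, (exec A N r).2 x i = None.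
  elim=> [|r IH] Hr x Hx.
    have Hxi : prev0 A N x = None.
      rewrite /prev0; case: eqP => // Ex; by rewrite Ex connect0 in Hx.
    rewrite exec_01 exec_02 Hxi /node_round.
    by case: hasP => [[i _ //]|_].
  have [IH1 _] := IH (ltnW Hr) x Hx.
  have Hinb : forall i, inbox N (exec A N r).2 x i = None.
    move=> i; case Hs: (inbox N (exec A N r).2 x i) => [m|] //.
    have [Hi Hm] := inbox_some (ltac:(by rewrite Hs) : isSome (inbox N (exec A N r).2 x i)).
    set w := nth x (nbr N x) i in Hm.
    have Hxw : adj N x w := adj_nbr HN Hi.
    case Hc: (cr u v x w).
      by case: Hm; apply: (no_msg_cr (ltnW Hr)).
    have Hw : ~~ connect d (initiator N) w.
      apply: contra Hx => Hw; apply: connect_trans Hw _; apply: connect1.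
      by rewrite /d del_edgeE Hsym crC Hc Hxw.
    by case: Hm; case: (IH (ltnW Hr) w Hw).
  rewrite exec_S1 exec_S2 IH1.
  have -> : inbox N (exec A N r).2 x = fun _ => None.
    exact: FunctionalExtensionality.functional_extensionality Hinb.
  by rewrite /node_round; case: hasP => [[i _ //]|_].
have [s [Hs _]] := Ht z.
by have [] := Inv T (leqnn T) z Hz; rewrite Hs.
Qed.
End Bridge.

Section Cross.
Variables (A : protocol) (V : finType) (N : network V).
Hypothesis HN : valid_network N.
Variables (u v : V).
Hypothesis Huv : adj N u v.
Hypothesis Hconn : forall x y, connect (del_edge (adj N) u v) x y.

Definition M := (\sum_(z : V) ident N z).+1.
Definition adj' : rel (V * bool) := fun a b => adj N a.1 b.1 && (b.2 == a.2 (+) cr u v a.1 b.1).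
Definition ident' (a : V * bool) := if a.2 then ident N a.1 + M else ident N a.1.
Definition nbr' (a : V * bool) := map (fun w => (w, a.2 (+) cr u v a.1 w)) (nbr N a.1).
Definition N' : network (V * bool)%type := Network adj' ident' nbr' (initiator N, false).

Lemma ident_lt z : ident N z < M.
Proof. rewrite /M ltnS (bigD1 z) //=; exact: leq_addr. Qed.

Lemma finj w b : injective (fun z : V => (z, b (+) cr u v w z)).
Proof. by move=> x y [] . Qed.

Lemma valid' : valid_network N'.
Proof.
case: HN => Hsym [Hirr [Hc [Hinj Hn]]].
split.
  move=> [x b] [y c]; rewrite /= /adj' /= Hsym crC.
  by case: b; case: c; case: (cr u v y x).
split.
  by move=> [x b]; rewrite /= /adj' /= Hirr.
split.
  have lift b x y : connect (del_edge (adj N) u v) x y -> connect adj' (x, b) (y, b).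
    move/connectP=> [p Hp ->]; elim: p x Hp => [|z p IHp] x /=; first by rewrite connect0.
    case/andP=> H1 H2; apply: connect_trans (IHp _ H2); apply: connect1.
    move: H1; rewrite del_edgeE /adj' /= => /andP [-> /negbTE ->].
    by rewrite addbF eqxx.
  move=> [x b] [y c]; case: (eqVneq b c) => [<-|Hbc]; first exact: lift.
  apply: connect_trans (lift b _ _ (Hconn x u)) _.
  apply: connect_trans (lift c _ _ (Hconn v y)).
  apply: connect1; rewrite /adj' /= Huv /cr !eqxx /=.
  by move: Hbc; case: b; case: c.
split.
  move=> [x b] [y c].
  case: b; case: c; rewrite /= /ident' /= => H.
  - by move/addIn/Hinj: H => /= E; rewrite E.
  - by have := ident_lt y; rewrite -H ltnNge leq_addl.
  - by have := ident_lt x; rewrite H ltnNge leq_addl.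
  - by move/Hinj: H => /= E; rewrite E.
move=> [x b]; case: (Hn x) => Hu Hm; split.
  by rewrite /nbr' map_inj_uniq //; exact: finj.
move=> [w c]; rewrite /= /nbr' /adj' /=.
case: (eqVneq c (b (+) cr u v x w)) => [->|Hc'].
  by rewrite (mem_map (@finj x b)) Hm andbT.
rewrite andbF; apply/mapP => -[z _ [E1 E2]]; move: Hc'; by rewrite E2 E1 eqxx.
Qed.


Hypothesis Hno : forall r,
  (exec A N r).2 u (index v (nbr N u)) = None /\ (exec A N r).2 v (index u (nbr N v)) = None.

Lemma no_msg_cr' r x w : cr u v x w -> (exec A N r).2 w (index x (nbr N w)) = None.
Proof.
case: (Hno r) => H1 H2.
by case/orP=> /andP [/eqP -> /eqP ->].
Qed.

Lemma deg' a : deg N' a = deg N a.1.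
Proof. by rewrite /deg /= /nbr' size_map. Qed.

Lemma nth' a i : i < deg N a.1 ->
  nth a (nbr N' a) i = (nth a.1 (nbr N a.1) i, a.2 (+) cr u v a.1 (nth a.1 (nbr N a.1) i)).
Proof. by move=> Hi; rewrite /= /nbr' (nth_map a.1). Qed.

Lemma index' x w b : index (x, b) (nbr N' (w, b (+) cr u v x w)) = index x (nbr N w).
Proof.
rewrite /= /nbr' /=.
have -> : (x, b) = (x, b (+) cr u v x w (+) cr u v w x).
  by rewrite crC -addbA addbb addbF.
by rewrite (index_map (@finj w _)).
Qed.

Lemma node_round_false x (p : option (pstate A)) inb :
  node_round N' (x, false) p inb = node_round N x p inb.
Proof. by rewrite /node_round /restrict !deg' /=. Qed.

Lemma node_round_true x :
  node_round N' (x, true) (None : option (pstate A)) (fun _ => None) = (None, fun _ => None).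
Proof. by rewrite /node_round; case: hasP => [[i _ //]|_]. Qed.

Lemma sim r :
  (forall x, (exec A N' r).1 (x, false) = (exec A N r).1 x /\ (exec A N' r).1 (x, true) = None) /\
  (forall x, (exec A N' r).2 (x, false) = (exec A N r).2 x /\ (exec A N' r).2 (x, true) = fun _ => None).
Proof.
have P0 x : prev0 A N' (x, false) = prev0 A N x.
  by rewrite /prev0 /= xpair_eqE andbT deg'.
have P1 x : prev0 A N' (x, true) = None.
  by rewrite /prev0 /= xpair_eqE andbF.
elim: r => [|r [IH1 IH2]].
  split=> x; rewrite ?exec_01 ?exec_02 P0 P1 node_round_false node_round_true //.
have Ib x : inbox N' (exec A N' r).2 (x, false) = inbox N (exec A N r).2 x /\
            inbox N' (exec A N' r).2 (x, true) = fun _ => None.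
  split; apply: functional_extensionality => i; rewrite /inbox deg' /=;
    case: ifP => // Hi; rewrite (nth' (a:=(x,_)) Hi) /=;
    set w := nth x (nbr N x) i; case Hc: (cr u v x w).
  - have E := index' x w false; rewrite Hc /= in E.
    by rewrite E (proj2 (IH2 w)) no_msg_cr'.
  - have E := index' x w false; rewrite Hc /= in E.
    by rewrite E (proj1 (IH2 w)).
  - have E := index' x w true; rewrite Hc /= in E.
    by rewrite E (proj1 (IH2 w)) no_msg_cr'.
  - have E := index' x w true; rewrite Hc /= in E.
    by rewrite (proj2 (IH2 w)).
split=> x; rewrite ?exec_S1 ?exec_S2 (proj1 (Ib x)) (proj2 (Ib x)) (proj1 (IH1 x)) (proj2 (IH1 x))
   node_round_false node_round_true //.
Qed.

Lemma cross_false : identifies_bridges A -> False.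
Proof.
move=> Hid; have [T' [Ht' _]] := Hid _ N' valid'.
have [s [Hs _]] := Ht' (initiator N, true).
by rewrite (proj2 ((proj1 (sim T')) (initiator N))) in Hs.
Qed.

End Cross.

Section Count.
Variables (A : protocol) (V : finType) (N : network V).
Hypothesis HN : valid_network N.
Hypothesis Hid : identifies_bridges A.
Variable T : nat.
Hypothesis Ht : terminated A N T.

Definition sentb (r : nat) (x y : V) := isSome ((exec A N r).2 x (index y (nbr N x))).

Lemma edge_used x y : adj N x y -> exists r : 'I_T.+1, sentb r x y || sentb r y x.
Proof.
move=> Hxy.
case: (boolP [exists r : 'I_T.+1, sentb r x y || sentb r y x]) => [/existsP //|].
rewrite negb_exists => /forallP Hn; exfalso.
have Hno r : r <= T -> (exec A N r).2 x (index y (nbr N x)) = None /\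
                       (exec A N r).2 y (index x (nbr N y)) = None.
  move=> Hr; have := Hn (Ordinal (Hr : r < T.+1)); rewrite negb_or /sentb /=.
  by case: ((exec A N r).2 x _); case: ((exec A N r).2 y _).
case Hb: (is_bridge (adj N) x y).
  exact: (bridge_false HN Ht Hno Hb).
have Hconn : forall a b, connect (del_edge (adj N) x y) a b.
  move: Hb; rewrite /is_bridge Hxy /= => /negbFE /forallP H a.
  by have /forallP := H a.
apply: (cross_false HN Hxy Hconn _ Hid) => r.
case: (leqP r T) => [|HrT]; first exact: Hno.
have [_ H2] := halted_after Ht (r - T).
by rewrite subnKC ?(ltnW HrT) // in H2; rewrite !H2 // subn_gt0.
Qed.
End Count.

Section Count2.
Variables (A : protocol) (V : finType) (N : network V).
Hypothesis HN : valid_network N.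

Lemma local_bound r x :
  \sum_(w : V) (adj N x w && sentb A N r x w : nat) <=
  count (fun i => isSome ((exec A N r).2 x i)) (iota 0 (deg N x)).
Proof.
case: HN => _ [_ [_ [_ Hn]]]; case: (Hn x) => Hu Hm.
set Q := (fun i => isSome ((exec A N r).2 x i)).
have -> : \sum_(w : V) (adj N x w && sentb A N r x w : nat) = #|[pred w | adj N x w && sentb A N r x w]|.
  by rewrite -sum1_card [RHS]big_mkcond /=; apply: eq_bigr => w _; rewrite inE; case: (_ && _).
have -> : #|[pred w | adj N x w && sentb A N r x w]| = #|filter (sentb A N r x) (nbr N x)|.
  by apply: eq_card => w; rewrite !inE mem_filter Hm andbC.
rewrite (card_uniqP _); last exact: filter_uniq.
rewrite size_filter.
have -> : count (sentb A N r x) (nbr N x) = count Q (map (index^~ (nbr N x)) (nbr N x)).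
  by rewrite count_map.
rewrite -!size_filter; apply: uniq_leq_size.
  rewrite filter_uniq // map_inj_in_uniq //; exact: index_inj.
move=> i; rewrite !mem_filter => /andP [-> /mapP [w Hw ->]] /=.
by rewrite mem_iota add0n index_mem.
Qed.

Lemma count_bound (Hid : identifies_bridges A) T (Ht : terminated A N T) :
  nedges (adj N) <= msg_count A N T.
Proof.
have Hsym : symmetric (adj N) by case: HN.
set S := [set t : 'I_T.+1 * V * V | adj N t.1.2 t.2 && sentb A N t.1.1 t.1.2 t.2].
apply: (@leq_trans #|S|).
  apply: (@leq_trans #|[set [set t.1.2; t.2] | t in S]|); last exact: leq_imset_card.
  apply: subset_leq_card; apply/subsetP => E; rewrite inE => /existsP [x /existsP [y /andP [Hxy /eqP ->]]].
  have [r /orP [H|H]] := edge_used HN Hid Ht Hxy.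
    by apply/imsetP; exists (r, x, y); rewrite // inE /= Hxy H.
  apply/imsetP; exists (r, y, x); first by rewrite inE /= Hsym Hxy H.
  by rewrite /= setUC.
have -> : #|S| = \sum_(r < T.+1) \sum_(x : V) \sum_(w : V) (adj N x w && sentb A N r x w : nat).
  rewrite pair_bigA /= pair_bigA /= -sum1_card big_mkcond /=.
  by apply: eq_bigr => -[[r x] w] _; rewrite inE /=; case: (_ && _).
rewrite /msg_count; apply: leq_sum => r _; apply: leq_sum => x _.
exact: local_bound.
Qed.
End Count2.

Theorem mainTheorem2 (A : protocol) :
  identifies_bridges A ->
  forall (V : finType) (N : network V), valid_network N ->
  forall T : nat, terminated A N T ->
    nedges (adj N) <= msg_count A N T /\
    (forall D : nat, is_diam (adj N) D -> D <= 2 * T).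
Proof.
move=> Hid V N HN T Ht; split.
  exact: (@count_bound A V N HN Hid T Ht).
exact: (@diam_bound A V N HN T Ht).
Qed.
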